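(* Let $\Gamma$ be a compact abelian group (written multiplicatively) such that for every $a\in\mathbb{N}^{\times}$ the subgroup $\omega_a(\Gamma)$ has finite index in $\Gamma$, the kernel $\ker\omega_a$ is finite, and $|\ker\omega_{ab}|=|\ker\omega_a|\cdot|\ker\omega_b|$ for all $a,b\in\mathbb{N}^{\times}$, where $\omega_a(g)=g^a$. For $a\in\mathbb{N}^{\times}$ let $\Gamma_a:=\{(a,g):g\in\Gamma\}$, and give $\Lambda_\Gamma:=\bigcup_{a\in\mathbb{N}^{\times}}\Gamma_a$ the topology in which each $\Gamma_a$ is a compact open copy of $\Gamma$. Define $r,s:\Lambda_\Gamma\to\Lambda^1:=\Gamma$ and $d:\Lambda_\Gamma\to\mathbb{N}^{\times}$ by $r(a,g)=g$, $s(a,g)=g^a$, $d(a,g)=a$, and define composition by $(a,g)(b,g^a):=(ab,g)$ (the element $(1,g)$ being identified with the object $g$). Then $\Lambda=(\Gamma,\Lambda_\Gamma,r,s,d)$ is a topological $\mathbb{N}^{\times}$-graph, and it is row-finite and has no sources.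
   Context: $\mathbb{N}^{\times}=\{a\in\mathbb{Z}:a>0\}$ is the multiplicative semigroup of positive integers. A topological $\mathbb{N}^{\times}$-graph (a topological higher-rank graph in Yamashita's sense, with degree semigroup $\mathbb{N}^{\times}\cong\mathbb{N}^\infty$ written multiplicatively) is a small category $\Lambda$ whose object set $\Lambda^1$ and morphism set are topological spaces (locally compact Hausdorff), together with a functor $d$ (the degree) from $\Lambda$ to $\mathbb{N}^{\times}$, such that: the range map $r$ is continuous, the source map $s$ is a local homeomorphism, $d$ is continuous, composition is continuous and open, and the factorisation property holds: if $d(\lambda)=ab$ then there are unique $\mu,\nu$ with $d(\mu)=a$, $d(\nu)=b$ and $\lambda=\mu\nu$. Write $\Lambda^a=d^{-1}(a)$. $\Lambda$ is row-finite with no sources if each $r|_{\Lambda^a}:\Lambda^a\to\Lambda^1$ is proper and surjective. *)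

(* Defs.v *)
From HB Require Import structures.
From mathcomp Require Import all_boot all_order all_algebra.
From mathcomp Require Import all_classical all_reals all_analysis.
From mathcomp Require Import finmap.
Set Implicit Arguments. Unset Strict Implicit. Unset Printing Implicit Defensive.
Import Order.TTheory GRing.Theory Num.Theory.
Local Open Scope classical_set_scope.

(*  X       : object space (identified with Lambda^1 via obj)          *)
(*  comp    : composition, only meaningful on composable pairs         *)
(*            (l1, l2) with s l1 = r l2.                               *)

Definition composable (X L : Type) (r s : L -> X) : set (L * L) :=
  [set p | s p.1 = r p.2].

(* s is a local homeomorphism: continuous, and every point has an open
   neighbourhood U on which s is injective and maps open subsets of U to
   open sets (so s(U) is open and s|_U : U -> s(U) is a homeomorphism). *)
Definition local_homeomorphism (X L : topologicalType) (f : L -> X) : Prop :=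
  continuous f /\
  forall l : L, exists U : set L,
    [/\ open U, U l, {in U &, injective f} &
        forall V : set L, open V -> V `<=` U -> open (f @` V)].

Record is_top_Nx_graph (X L : topologicalType) (obj : X -> L)
    (r s : L -> X) (d : L -> nat) (comp : L -> L -> L) : Prop := {
  tg_X_hausdorff : hausdorff_space X;
  tg_X_lcompact : locally_compact [set: X];
  tg_L_hausdorff : hausdorff_space L;
  tg_L_lcompact : locally_compact [set: L];
  tg_r_obj : forall x, r (obj x) = x;
  tg_s_obj : forall x, s (obj x) = x;
  tg_r_comp : forall l1 l2, s l1 = r l2 -> r (comp l1 l2) = r l1;
  tg_s_comp : forall l1 l2, s l1 = r l2 -> s (comp l1 l2) = s l2;
  tg_id_left : forall l, comp (obj (r l)) l = l;
  tg_id_right : forall l, comp l (obj (s l)) = l;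
  tg_assoc : forall l1 l2 l3, s l1 = r l2 -> s l2 = r l3 ->
      comp (comp l1 l2) l3 = comp l1 (comp l2 l3);
  tg_d_pos : forall l, (0 < d l)%N;
  tg_d_obj : forall x, d (obj x) = 1%N;
  tg_d_comp : forall l1 l2, s l1 = r l2 -> d (comp l1 l2) = (d l1 * d l2)%N;
  tg_obj_cont : continuous obj;
  tg_r_cont : continuous r;
  tg_s_lhomeo : local_homeomorphism s;
  tg_d_cont : continuous d;   (* nat carries the discrete topology *)
  tg_comp_cont : {within composable r s, continuous (fun p => comp p.1 p.2)};
  tg_comp_open : forall U : set (L * L), open U ->
      open ((fun p => comp p.1 p.2) @` (U `&` composable r s));
  tg_factorisation : forall (l : L) (a b : nat), d l = (a * b)%N ->
      exists m n, [/\ d m = a, d n = b, s m = r n & l = comp m n] /\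
      forall m' n', d m' = a -> d n' = b -> s m' = r n' -> l = comp m' n' ->
        m' = m /\ n' = n
}.

(* row-finite with no sources: each r|_{Lambda^a} is proper and surjective *)
Definition row_finite_no_sources (X L : topologicalType)
    (r : L -> X) (d : L -> nat) : Prop :=
  forall a : nat, (0 < a)%N ->
    (forall K : set X, compact K -> compact ([set l | d l = a] `&` r @^-1` K))
    /\ (forall x : X, exists l, d l = a /\ r l = x).

(* The graph Lambda_Gamma of a compact abelian group Gamma (written     *)
(* additively here, so omega_a(g) = g^a becomes g *+ a).                *)
(* Lambda_Gamma = disjoint union over a in N^x of copies Gamma_a of     *)
(* Gamma is modelled as nat * Gamma with the product topology (nat      *)
(* discrete), the pair (n, g) standing for (a, g) with a = n + 1.       *)
Section GroupGraph.
Local Open Scope ring_scope.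
Variable G : topologicalZmodType.

Definition omega (a : nat) (g : G) : G := g *+ a.
Definition kerw (a : nat) : set G := [set g | omega a g = 0].
Definition cosets_imw (a : nat) : set (set G) :=
  [set C | exists g : G, C = [set g + omega a h | h in [set: G]]].

Definition LG := (nat * G)%type.
Definition LG_obj (g : G) : LG := (0%N, g).
Definition LG_r (p : LG) : G := p.2.
Definition LG_s (p : LG) : G := omega p.1.+1 p.2.
Definition LG_d (p : LG) : nat := p.1.+1.
(* (a, g)(b, g^a) = (ab, g) *)
Definition LG_comp (p q : LG) : LG := ((p.1.+1 * q.1.+1).-1, p.2).
End GroupGraph.

(* Main.v *)
Require Import Defs.
From HB Require Import structures.
From mathcomp Require Import all_boot all_order all_algebra.
From mathcomp Require Import all_classical all_reals all_analysis.
From mathcomp Require Import finmap.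
Import Order.TTheory GRing.Theory Num.Theory.
Local Open Scope classical_set_scope.

Lemma nat_loc_const (T : topologicalType) (f : T -> nat) (x : T) :
  (\forall y \near x, f y = f x) -> f @ x --> f x.
Proof.
move=> H B /= nB; apply: (filterS _ H) => y /= fy.
rewrite /preimage /= fy; exact: nbhs_singleton nB.
Qed.

Lemma fst_cont (U V : topologicalType) : continuous (@fst U V).
Proof. by move=> x; exact: cvg_fst. Qed.

Lemma snd_cont (U V : topologicalType) : continuous (@snd U V).
Proof. by move=> x; exact: cvg_snd. Qed.

Lemma fst_near (U : topologicalType) (x : nat * U) :
  \forall y \near x, y.1 = x.1.
Proof. have := @fst_cont nat U x [set x.1] (discrete_set1 x.1). by []. Qed.

Lemma near_eq_cvg' (T U : topologicalType) (f g : T -> U) (x : T) (l : U) :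
  (\forall y \near x, f y = g y) -> g @ x --> l -> f @ x --> l.
Proof.
move=> H gl B /gl /= gB; apply: (filterS2 _ _ H gB) => y fg; rewrite /preimage /= fg; exact.
Qed.

Lemma open_local (T : topologicalType) (A : set T) :
  (forall x, A x -> exists B, [/\ open B, B x & B `<=` A]) -> open A.
Proof.
move=> H; rewrite openE => x /H [B [oB Bx BA]].
rewrite /interior nbhsE; exists B => //; split.
Qed.


Section GL.
Local Open Scope ring_scope.
Variable G : topologicalZmodType.

Lemma natmul_cont (a : nat) : continuous (fun g : G => g *+ a).
Proof.
elim: a => [|a IH].
  have -> : (fun g : G => g *+ 0) = (fun=> 0) by apply: funext => g; rewrite mulr0n.
  by move=> x; exact: cvg_cst.
have -> : (fun g : G => g *+ a.+1) =
    (fun z : G * G => z.1 + z.2) \o (fun g => (g, g *+ a)).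
  by apply: funext => g; rewrite /= mulrS.
move=> x; apply: continuous_comp; last exact: add_continuous.
by apply: cvg_pair; [exact: cvg_id | exact: IH].
Qed.

Lemma transl_cont (k : G) : continuous (fun x : G => x - k).
Proof.
have -> : (fun x : G => x - k) = (fun z : G * G => z.1 - z.2) \o (fun x => (x, k)).
  by apply: funext.
move=> x; apply: continuous_comp; last exact: sub_continuous.
by apply: cvg_pair; [exact: cvg_id | exact: cvg_cst].
Qed.

Lemma transl_cont' (k : G) : continuous (fun x : G => k + x).
Proof.
have -> : (fun x : G => k + x) = (fun z : G * G => z.1 + z.2) \o (fun x => (k, x)).
  by apply: funext.
move=> x; apply: continuous_comp; last exact: add_continuous.
by apply: cvg_pair; [exact: cvg_cst | exact: cvg_id].
Qed.

Lemma omegaB a x y : omega a (x - y) = omega a x - omega a y :> G.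
Proof. by rewrite /omega mulrnBl. Qed.

Lemma omegaD a x y : omega a (x + y) = omega a x + omega a y :> G.
Proof. by rewrite /omega mulrnDl. Qed.

Lemma omega0 a : omega a (0 : G) = 0.
Proof. by rewrite /omega mul0rn. Qed.

Hypothesis Gcompact : compact [set: G].
Hypothesis Ghausdorff : hausdorff_space G.

Lemma image_closed (f : G -> G) (C : set G) : continuous f -> closed C -> closed (f @` C).
Proof.
move=> fc cC; apply: compact_closed => //; apply: continuous_compact.
  exact: continuous_subspaceT.
exact: (subclosed_compact cC Gcompact).
Qed.

Lemma imw_open a : (0 < a)%N -> finite_set (@cosets_imw G a) ->
  open (omega a @` [set: G]).
Proof.
move=> a0 fin; rewrite -closedC.
set I := omega a @` [set: G].
have -> : ~` I = \bigcup_(C in cosets_imw a `\` [set I]) C.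
  apply/seteqP; split => x.
    move=> nIx; exists [set x + omega a h | h in [set: G]].
      split; first by exists x.
      move=> /= E; apply: nIx; rewrite -E; by exists 0 => //; rewrite omega0 addr0.
    by exists 0 => //; rewrite omega0 addr0.
  move=> [C [[g ->] /= CI] [h _ <-]] [h0 _ e].
  apply: CI; apply/seteqP; split => y.
    move=> [h1 _ <-]; exists (h0 - h + h1) => //.
    by rewrite omegaD omegaB e addrK.
  move=> [h1 _ <-]; exists (h1 - h0 + h) => //.
  rewrite omegaD omegaB e.
  set X := omega a h1; set Y := omega a h.
  by rewrite opprD addrA addrCA addNKr subrK.
apply: closed_bigcup; first exact: finite_setD.
move=> C [[g ->] _].
apply: image_closed; last exact: closedT.
move=> x; apply: (@continuous_comp _ _ _ (omega a) (fun y => g + y)).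
  exact: natmul_cont.
exact: transl_cont'.
Qed.

Lemma omega_open a : (0 < a)%N -> finite_set (@cosets_imw G a) ->
  forall V : set G, open V -> open (omega a @` V).
Proof.
move=> a0 fin V oV.
set P := [set x | exists2 k, omega a k = 0 & V (x - k)].
have oP : open P.
  have -> : P = \bigcup_(k in kerw a) [set x | V (x - k)].
    by apply/seteqP; split => x [k kk Vk]; exists k.
  apply: bigcup_open => k _.
  have -> : [set x | V (x - k)] = (fun x => x - k) @^-1` V by [].
  by apply: open_comp => // x _; exact: transl_cont.
have -> : omega a @` V = omega a @` [set: G] `&` ~` (omega a @` (~` P)).
  apply/seteqP; split => y.
    move=> [v Vv <-]; split; first by exists v.
    move=> [c nPc ec]; apply: nPc; exists (c - v).
      by rewrite omegaB ec subrr.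
    by rewrite opprB addrC subrK.
  move=> [[x _ <-] nc].
  have Px : P x by apply: contrapT => nPx; apply: nc; exists x.
  case: Px => k kk Vk; exists (x - k) => //.
  by rewrite omegaB kk subr0.
apply: openI; first exact: imw_open.
rewrite openC; apply: image_closed; first exact: natmul_cont.
by rewrite closedC.
Qed.

Lemma loc_inj a : finite_set (@kerw G a) ->
  exists W : set G, [/\ open W, W 0 &
    forall x y, W x -> W y -> omega a (x - y) = 0 -> x = y].
Proof.
move=> fin.
pose K := kerw a `\` [set (0:G)].
have cK : closed K.
  have -> : K = \bigcup_(k in K) [set k].
    by apply/seteqP; split => x; [move=> Kx; exists x | move=> [k Kk ->]].
  apply: closed_bigcup; first exact: finite_setD.
  move=> k _; exact: (accessible_closed_set1 (hausdorff_accessible Ghausdorff)).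
have nN : nbhs (0 : G) (~` K).
  rewrite nbhsE; exists (~` K) => //; split; first by rewrite openC.
  by move=> [_ /(_ erefl)].
have nP : nbhs ((0 : G), (0 : G)) ((fun z : G * G => z.1 - z.2) @^-1` (~` K)).
  apply: sub_continuous; by rewrite /= subr0.
case: nP => [[A B]] /= [nA nB] AB.
have : nbhs (0 : G) (A `&` B) by exact: filterI.
rewrite nbhsE => -[W [oW W0] WAB]; exists W; split => //.
move=> x y Wx Wy kxy; have [Ax _] := WAB x Wx; have [_ By] := WAB y Wy.
have := AB (x, y) (conj Ax By) => /= nK.
by apply/eqP; rewrite -subr_eq0; apply/eqP; apply: contrapT => nz; apply: nK.
Qed.

End GL.


Lemma L_haus (G : topologicalType) : hausdorff_space G -> hausdorff_space (nat * G)%type.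
Proof.
rewrite !open_hausdorff => hG [n x] [m y] nxy.
have [enm|nnm] := eqVneq n m.
  subst m; have xy : x != y by apply: contraNneq nxy => ->.
  have [[A B] [/= Ax By] [oA oB AB0]] := hG x y xy.
  exists (snd @^-1` A, snd @^-1` B); split; rewrite ?inE //=.
  - by apply: open_comp => // z _; exact: snd_cont.
  - by apply: open_comp => // z _; exact: snd_cont.
  - apply/eqP; apply/seteqP; split => // z [Az Bz].
    by move/eqP: AB0 => e; have : (A `&` B) z.2 by []; rewrite e.
exists (fst @^-1` [set n], fst @^-1` [set m]); split; rewrite ?inE //=.
- by apply/mem_set.
- by apply/mem_set.
- by apply: open_comp; [move=> z _; exact: fst_cont | exact: discrete_open].
- by apply: open_comp; [move=> z _; exact: fst_cont | exact: discrete_open].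
- by apply/eqP; apply/seteqP; split => // z [/= -> e]; move/eqP: nnm.
Qed.


Theorem proposition3p2 (G : topologicalZmodType)
  (Gcompact : compact [set: G]) (Ghausdorff : hausdorff_space G)
  (Hindex : forall a : nat, (0 < a)%N -> finite_set (@cosets_imw G a))
  (Hker : forall a : nat, (0 < a)%N -> finite_set (@kerw G a))
  (Hmult : forall a b : nat, (0 < a)%N -> (0 < b)%N ->
      #|` fset_set (@kerw G (a * b)) | =
      (#|` fset_set (@kerw G a) | * #|` fset_set (@kerw G b) |)%N) :
  is_top_Nx_graph (@LG_obj G) (@LG_r G) (@LG_s G) (@LG_d G) (@LG_comp G) /\
  row_finite_no_sources (@LG_r G) (@LG_d G).
Proof.
Local Open Scope ring_scope.
have LH := @L_haus G Ghausdorff.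
split; last first.
  move=> a a0; split.
    move=> K cK.
    have -> : [set l | @LG_d G l = a] `&` @LG_r G @^-1` K = [set a.-1] `*` K.
      apply/seteqP; split => -[n g] /=; rewrite /LG_d /LG_r /=.
        by move=> [<- Kg].
      by move=> [-> Kg]; rewrite prednK.
    apply: compact_setX => //; exact: compact_set1.
  by move=> x; exists (a.-1, x); rewrite /LG_d /LG_r /= prednK.
split.
- exact: Ghausdorff.
- move=> x _; rewrite withinET; exists setT; first exact: filterT.
  by split; [exact: Gcompact | exact: closedT].
- exact: LH.
- move=> x _; rewrite withinET; exists ([set x.1] `*` [set: G]).
    by apply: (filterS _ (@fst_near G x)) => y /= ->.
  have cc : compact ([set x.1] `*` [set: G]).
    by apply: compact_setX => //; exact: compact_set1.
  by split => //; exact: compact_closed.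
- by [].
- by [].
- by [].
- move=> [n g] [m h]; rewrite /LG_s /LG_r /LG_comp /= => e.
  rewrite /LG_s /LG_r in e; rewrite /LG_s /LG_r /LG_comp.
  have E : ((n.+1 * m.+1).-1).+1 = (n.+1 * m.+1)%N by rewrite prednK ?muln_gt0.
  by rewrite E /omega mulrnA -e.
- by move=> [n g]; rewrite /LG_comp mul1n.
- by move=> [n g]; rewrite /LG_comp muln1.
- move=> [n1 g1] [n2 g2] [n3 g3] _ _; rewrite /LG_comp.
  have E1 : ((n1.+1 * n2.+1).-1).+1 = (n1.+1 * n2.+1)%N by rewrite prednK ?muln_gt0.
  have E2 : ((n2.+1 * n3.+1).-1).+1 = (n2.+1 * n3.+1)%N by rewrite prednK ?muln_gt0.
  by rewrite E1 E2 mulnA.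
- by [].
- by [].
- move=> [n g] [m h] _; rewrite /LG_d /LG_comp.
  by rewrite prednK ?muln_gt0.
- move=> x; rewrite /LG_obj; apply: (@cvg_pair _ _ _ _ (nbhs (0%N : nat))); [exact: cvg_cst | exact: cvg_id].
- exact: snd_cont.
- split.
    move=> p; apply: (@near_eq_cvg' _ _ _ (fun q : nat * G => omega p.1.+1 q.2)).
      by apply: (filterS _ (@fst_near G p)) => q /= e; rewrite /LG_s e.
    apply: (@continuous_comp _ _ _ snd (omega p.1.+1)); first exact: snd_cont.
    exact: natmul_cont.
  move=> [n g].
  have [W [oW W0 Winj]] := @loc_inj G Ghausdorff n.+1 (Hker n.+1 isT).
  exists ((fst @^-1` [set n]) `&` ((fun q : nat * G => q.2 - g) @^-1` W)); split.
  + apply: openI.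
      by apply: open_comp; [move=> z _; exact: fst_cont | exact: discrete_open].
    apply: open_comp => // z _.
    apply: (@continuous_comp _ _ _ snd (fun x => x - g)); first exact: snd_cont.
    exact: transl_cont.
  + by split => //=; rewrite subrr.
  + move=> [n1 x] [n2 y]; rewrite /= => /set_mem [/= -> Wx] /set_mem [/= -> Wy].
    rewrite /LG_s /= => e.
    have : x - g = y - g.
      apply: Winj => //; rewrite !omegaB e.
      by rewrite opprB addrA subrK subrr.
    by move/(congr1 (fun z => z + g)); rewrite !subrK => ->.
  + move=> V oV _; apply: open_local => y [[n1 x] Vx <-].
    exists (omega n1.+1 @` [set z | V (n1, z)]); split.
    * apply: (@omega_open G Gcompact Ghausdorff) => //; first exact: Hindex.
      apply: (@open_comp _ _ (fun z : G => (n1, z)) V) => // z _.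
      apply: (@cvg_pair _ _ _ _ (nbhs (n1 : nat))); [exact: cvg_cst | exact: cvg_id].
    * by exists x.
    * by move=> z [w Vw <-]; exists (n1, w).
- move=> p; apply: nat_loc_const; apply: (filterS _ (@fst_near G p)) => q /=.
  by rewrite /LG_d => ->.
- apply: continuous_subspaceT => -[p q]; apply: (@cvg_pair _ _ _ _ (nbhs (LG_comp p q).1)).
    apply: nat_loc_const.
    have h1 : \forall z \near (p, q), z.1.1 = p.1.
      exact: (@fst_cont (nat * G)%type (nat * G)%type (p, q) _ (@fst_near G p)).
    have h2 : \forall z \near (p, q), z.2.1 = q.1.
      exact: (@snd_cont (nat * G)%type (nat * G)%type (p, q) _ (@fst_near G q)).
    apply: filterS2 h1 h2 => z /= e1 e2.
    by rewrite /LG_comp /= e1 e2.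
  apply: (@continuous_comp _ _ _ fst snd); [exact: fst_cont | exact: snd_cont].
- move=> U oU; apply: open_local => y [[p q] [Upq cpq] <-].
  exists ((fst @^-1` [set (LG_comp p q).1]) `&`
    ((fun z : nat * G => ((p.1, z.2), (q.1, omega p.1.+1 z.2))) @^-1` U)); split.
  + apply: openI.
      by apply: open_comp; [move=> z _; exact: fst_cont | exact: discrete_open].
    apply: open_comp => // z _.
    apply: (@cvg_pair _ _ _ _ (nbhs (p.1, z.2)) (nbhs (q.1, omega p.1.+1 z.2))).
      apply: (@cvg_pair _ _ _ _ (nbhs (p.1 : nat))); [exact: cvg_cst | exact: (@snd_cont nat G z)].
    apply: (@cvg_pair _ _ _ _ (nbhs (q.1 : nat))); first exact: cvg_cst.
    apply: (@continuous_comp _ _ _ snd (omega p.1.+1)); first exact: snd_cont.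
    exact: natmul_cont.
  + split => //=.
    move: p q Upq cpq => [n g] [m h] /= Upq cpq.
    by move: cpq; rewrite /composable /LG_s /LG_r /= => ->.
  + move=> [k z] [/= ek Uz].
    exists ((p.1, z), (q.1, omega p.1.+1 z)) => //.
    by rewrite /LG_comp /= -ek; case: (p) ek => n g.
- move=> [n g] a b e.
  have e' : n.+1 = (a * b)%N := e.
  clear e; case: a e' => [|a'] e'; first by rewrite mul0n in e'.
  case: b e' => [|b'] e'; first by rewrite muln0 in e'.
  exists (a', g), (b', omega a'.+1 g); split.
    by split => //; rewrite /LG_comp -e'.
  move=> [x1 x] [y1 y]; rewrite /LG_d /LG_s /LG_r /LG_comp => ea eb sr lc.
  case: ea sr lc => -> sr lc; case: eb sr lc => -> sr [_ gx].
  by rewrite gx; split => //; move: sr => /= <-.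
Qed.
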